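(* Let $G$ be a generator matrix on the discrete space $\mathcal X$, let $\theta>0$ and let $M\ge1$ be an integer such that $Q:=I+G/\theta$ and $I+G/M$ are entrywise non-negative. Let $K_n=I+\frac Gn\mathbb 1(n>M)$ for $n\ge1$. Let $\pi$ be a probability vector and $\mu$ a stationary distribution of $Q$ such that $\pi^tQ^n\to\mu^t$ entrywise. Then, with $(\mu^n)^t:=\pi^t\prod_{i=1}^nK_i$, as $n\to\infty$ both (a) $(\mu^n)^t\to\mu^t$ and (b) $(\mu^n)^tQ\to\mu^t$ hold entrywise.
   Context: A generator matrix on $\mathcal X$: $G_{i,j}\ge0$ for $i\ne j$, $G_{i,i}=-\sum_{j\ne i}G_{i,j}$, and $\sup_i|G_{i,i}|<\infty$. *)

(* Defs.v *)
From Stdlib Require Import Reals ClassicalEpsilon.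
Open Scope R_scope.

(* The discrete (countable, finite or infinite) state space X is described
   by an enumeration e : nat -> option X hitting every state exactly once. *)
Definition is_enum {X : Type} (e : nat -> option X) : Prop :=
  (forall x, exists n, e n = Some x) /\
  (forall n m x, e n = Some x -> e m = Some x -> n = m).

Definition lift {X : Type} (e : nat -> option X) (f : X -> R) (n : nat) : R :=
  match e n with Some x => f x | None => 0 end.

(* Sum over X of f (the limit of the series along the enumeration; used only
   for series of nonnegative terms in the statement). *)
Definition xsum {X : Type} (e : nat -> option X) (f : X -> R) : R :=
  epsilon (inhabits 0) (fun l => infinite_sum (lift e f) l).

Definition idm {X : Type} (eq_dec : forall x y : X, {x = y} + {x <> y})
  (x y : X) : R := if eq_dec x y then 1 else 0.

Definition vecmat {X : Type} (e : nat -> option X) (v : X -> R)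
  (A : X -> X -> R) : X -> R :=
  fun y => xsum e (fun x => v x * A x y).

Fixpoint vpow {X : Type} (e : nat -> option X) (v : X -> R)
  (A : X -> X -> R) (n : nat) : X -> R :=
  match n with
  | O => v
  | S k => vecmat e (vpow e v A k) A
  end.

Fixpoint vprod {X : Type} (e : nat -> option X) (v : X -> R)
  (K : nat -> X -> X -> R) (n : nat) : X -> R :=
  match n with
  | O => v
  | S k => vecmat e (vprod e v K k) (K (S k))
  end.

Definition is_generator {X : Type} (e : nat -> option X)
  (eq_dec : forall x y : X, {x = y} + {x <> y}) (G : X -> X -> R) : Prop :=
  (forall x y, x <> y -> 0 <= G x y) /\
  (forall x, infinite_sum (lift e (fun y => if eq_dec x y then 0 else G x y))
                          (- G x x)) /\
  (exists B, forall x, Rabs (G x x) <= B).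

Definition is_prob_vector {X : Type} (e : nat -> option X) (p : X -> R) : Prop :=
  (forall x, 0 <= p x) /\ infinite_sum (lift e p) 1.

Definition is_stationary {X : Type} (e : nat -> option X) (A : X -> X -> R)
  (m : X -> R) : Prop :=
  is_prob_vector e m /\ (forall y, vecmat e m A y = m y).

Definition Kmat {X : Type} (eq_dec : forall x y : X, {x = y} + {x <> y})
  (G : X -> X -> R) (M : nat) (n : nat) : X -> X -> R :=
  fun x y => idm eq_dec x y + (if Nat.ltb M n then G x y / INR n else 0).

(* Main.v *)
Require Import Defs.
From Stdlib Require Import Reals Lra Lia Psatz ClassicalEpsilon FunctionalExtensionality.
Open Scope R_scope.

Fixpoint fsum (f : nat -> R) (n : nat) : R :=
  match n with O => 0 | S k => fsum f k + f k end.

Lemma fsum_ext f g n : (forall k, (k < n)%nat -> f k = g k) -> fsum f n = fsum g n.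
Proof. induction n; simpl; intros H; auto. rewrite IHn by (intros; apply H; lia). rewrite H by lia; auto. Qed.

Lemma fsum_lin a b f g n : fsum (fun k => a * f k + b * g k) n = a * fsum f n + b * fsum g n.
Proof. induction n; simpl. ring. rewrite IHn; ring. Qed.

Lemma fsum_shift f n : fsum f (S n) = f O + fsum (fun k => f (S k)) n.
Proof. induction n. simpl; ring. change (fsum f (S (S n))) with (fsum f (S n) + f (S n)).
 rewrite IHn. simpl. ring. Qed.

Lemma fsum_nonneg f n : (forall k, 0 <= f k) -> 0 <= fsum f n.
Proof. intros H; induction n; simpl; [lra| specialize (H n); lra]. Qed.

Lemma fsum_mono f n m : (forall k, 0 <= f k) -> (n <= m)%nat -> fsum f n <= fsum f m.
Proof. intros H Hnm. induction Hnm. lra. simpl. specialize (H m). lra. Qed.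

Lemma fsum_le f g n : (forall k, f k <= g k) -> fsum f n <= fsum g n.
Proof. intros H; induction n; simpl; [lra| specialize (H n); lra]. Qed.

Lemma fsum_abs f n : Rabs (fsum f n) <= fsum (fun k => Rabs (f k)) n.
Proof. induction n; simpl. rewrite Rabs_R0; lra.
 eapply Rle_trans. apply Rabs_triang. lra. Qed.

Lemma fsum_trunc f K N : fsum (fun k => if Nat.ltb k K then f k else 0) N = fsum f (Nat.min N K).
Proof. induction N. simpl. destruct K; reflexivity.
 change (fsum (fun k => if Nat.ltb k K then f k else 0) (S N)) with
  (fsum (fun k => if Nat.ltb k K then f k else 0) N + (if Nat.ltb N K then f N else 0)).
 rewrite IHN. destruct (Nat.ltb N K) eqn:E.
 - apply Nat.ltb_lt in E. replace (Nat.min (S N) K) with (S N) by lia.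
   replace (Nat.min N K) with N by lia. reflexivity.
 - apply Nat.ltb_ge in E. replace (Nat.min (S N) K) with K by lia. replace (Nat.min N K) with K by lia. ring. Qed.

Lemma fsum_le_term f k n : (forall j, 0 <= f j) -> (k < n)%nat -> f k <= fsum f n.
Proof. intros H Hk. induction Hk; simpl. pose proof (fsum_nonneg f k H). lra.
 specialize (H m). lra. Qed.

Lemma fsum_cv0 (W : nat -> nat -> R) K : (forall k, Un_cv (fun n => W n k) 0) ->
  Un_cv (fun n => fsum (W n) K) 0.
Proof. intros H. induction K; simpl.
 - intros eps He. exists O. intros. unfold Rdist. rewrite Rminus_0_r, Rabs_R0. lra.
 - replace 0 with (0+0) by ring. apply CV_plus; auto. Qed.

Lemma cv_bounded (s : nat -> R) L : Un_cv s L -> exists D, forall k, Rabs (s k) <= D.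
Proof. intros H. destruct (H 1 ltac:(lra)) as [K HK].
 exists (fsum (fun k => Rabs (s k)) K + Rabs L + 1). intros k.
 destruct (Nat.lt_ge_cases k K).
 - pose proof (fsum_le_term (fun k => Rabs (s k)) k K (fun j => Rabs_pos _) H0).
   pose proof (Rabs_pos L). lra.
 - specialize (HK k H0). unfold Rdist in HK. pose proof (fsum_nonneg (fun k => Rabs (s k)) K (fun j => Rabs_pos _)).
   pose proof (Rabs_triang_inv (s k) L). lra. Qed.

Lemma mix_lim (W : nat -> nat -> R) (C : R) (s : nat -> R) L :
 (forall n, fsum (W n) (S n) = 1) ->
 (forall n, fsum (fun k => Rabs (W n k)) (S n) <= C) ->
 (forall k, Un_cv (fun n => W n k) 0) ->
 Un_cv s L -> Un_cv (fun n => fsum (fun k => W n k * s k) (S n)) L.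
Proof.
 intros H1 H2 H3 Hs eps Heps.
 assert (HC : 0 <= C). { eapply Rle_trans; [|apply (H2 O)]. apply fsum_nonneg. intros; apply Rabs_pos. }
 destruct (cv_bounded s L Hs) as [D0 HD0].
 set (D := D0 + Rabs L).
 assert (HD : forall k, Rabs (s k - L) <= D).
 { intros k. unfold D. pose proof (Rabs_triang (s k) (-L)). rewrite Rabs_Ropp in H. specialize (HD0 k).
   unfold Rminus. lra. }
 assert (HD' : 0 <= D). { pose proof (HD O). pose proof (Rabs_pos (s O - L)). lra. }
 set (e1 := eps / (2 * (C + 1))).
 assert (He1 : 0 < e1). { unfold e1. apply Rdiv_lt_0_compat; lra. }
 destruct (Hs e1 He1) as [K HK].
 set (e2 := eps / (2 * (D + 1))).
 assert (He2 : 0 < e2). { unfold e2. apply Rdiv_lt_0_compat; lra. }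
 destruct (fsum_cv0 (fun n k => Rabs (W n k)) K (fun k => ltac:(
   intros e He; destruct (H3 k e He) as [N HN]; exists N; intros n Hn;
   specialize (HN n Hn); unfold Rdist in *; rewrite Rminus_0_r in *; rewrite Rabs_Rabsolu; exact HN)) e2 He2)
   as [N1 HN1].
 exists N1. intros n Hn. specialize (HN1 n Hn). unfold Rdist in HN1. rewrite Rminus_0_r in HN1.
 rewrite Rabs_right in HN1 by (apply Rle_ge, fsum_nonneg; intros; apply Rabs_pos).
 unfold Rdist.
 assert (E : fsum (fun k => W n k * s k) (S n) - L = fsum (fun k => 1 * (W n k * s k) + (-L) * W n k) (S n)).
 { rewrite fsum_lin, H1. ring. }
 rewrite E.
 eapply Rle_lt_trans. apply fsum_abs.
 eapply Rle_lt_trans.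
 { apply (fsum_le _ (fun k => e1 * Rabs (W n k) + D * (if Nat.ltb k K then Rabs (W n k) else 0))).
   intros k. replace (1 * (W n k * s k) + - L * W n k) with (W n k * (s k - L)) by ring.
   rewrite Rabs_mult. pose proof (Rabs_pos (W n k)). destruct (Nat.ltb k K) eqn:Ek.
   - specialize (HD k). pose proof (Rmult_le_compat_l _ _ _ H HD). nra.
   - apply Nat.ltb_ge in Ek. specialize (HK k Ek). unfold Rdist in HK.
     pose proof (Rmult_le_compat_l _ _ _ H (Rlt_le _ _ HK)). lra. }
 rewrite (fsum_lin e1 D (fun k => Rabs (W n k))).
 rewrite fsum_trunc.
 pose proof (fsum_mono (fun k => Rabs (W n k)) (Nat.min (S n) K) K (fun k => Rabs_pos _) ltac:(lia)).
 pose proof (H2 n).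
 assert (e1 * C <= eps / 2). { unfold e1. apply (Rmult_le_reg_r (2 * (C+1))). lra. field_simplify; try lra; try nra. }
 assert (D * e2 < eps / 2). { unfold e2. apply (Rmult_lt_reg_r (2 * (D+1))). lra. field_simplify; try lra; try nra. }
 pose proof (Rmult_le_compat_l e1 _ _ (Rlt_le _ _ He1) H0).
 assert (D * fsum (fun k => Rabs (W n k)) (Nat.min (S n) K) <= D * e2).
 { apply Rmult_le_compat_l; lra. }
 lra.
Qed.

Lemma RL (b x ep : nat -> R) (N0 : nat) :
  (forall n, (N0 <= n)%nat -> 0 <= b n <= 1) ->
  (forall n, (N0 <= n)%nat -> x (S n) = (1 - b n) * x n + b n * ep n) ->
  Un_cv ep 0 ->
  (forall N, (N0 <= N)%nat -> forall B, exists m, B <= fsum (fun j => b (N + j)%nat) m) ->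
  Un_cv x 0.
Proof.
 intros Hb Hx Hep Hdiv eps Heps.
 destruct (Hep (eps/2) ltac:(lra)) as [N1' HN1].
 set (N1 := Nat.max N0 N1').
 set (y := fun n => Rmax (Rabs (x n) - eps/2) 0).
 assert (Hy0 : forall n, 0 <= y n) by (intros; apply Rmax_r).
 assert (Hstep : forall n, (N1 <= n)%nat -> y (S n) <= (1 - b n) * y n).
 { intros n Hn. specialize (Hb n ltac:(lia)). specialize (Hx n ltac:(lia)). specialize (HN1 n ltac:(lia)).
   unfold Rdist in HN1. rewrite Rminus_0_r in HN1. unfold y. rewrite Hx.
   apply Rmax_lub.
   - pose proof (Rabs_triang ((1 - b n) * x n) (b n * ep n)). rewrite !Rabs_mult in H.
     rewrite (Rabs_right (1 - b n)) in H by lra. rewrite (Rabs_right (b n)) in H by lra.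
     pose proof (Rmax_l (Rabs (x n) - eps / 2) 0).
     assert (b n * Rabs (ep n) <= b n * (eps/2)) by (apply Rmult_le_compat_l; lra).
     assert ((1 - b n) * (Rabs (x n) - eps/2) <= (1 - b n) * Rmax (Rabs (x n) - eps / 2) 0)
       by (apply Rmult_le_compat_l; lra). nra.
   - pose proof (Rmax_r (Rabs (x n) - eps / 2) 0). nra. }
 assert (Hk : forall m, y (N1 + m)%nat * (1 + fsum (fun j => b (N1 + j)%nat) m) <= y N1).
 { induction m. simpl. rewrite Nat.add_0_r. lra.
   simpl fsum. replace (N1 + S m)%nat with (S (N1 + m)) by lia.
   specialize (Hstep (N1 + m)%nat ltac:(lia)). assert (0 <= fsum (fun j => b (N1 + j)%nat) m) by (apply fsum_nonneg; intros; apply Hb; lia).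
   specialize (Hb (N1+m)%nat ltac:(lia)).
   pose proof (Hy0 (N1 + m)%nat). pose proof (Hy0 (S (N1 + m))).
   set (S0 := fsum (fun j => b (N1 + j)%nat) m) in *. set (bb := b (N1 + m)%nat) in *.
   assert (y (S (N1 + m)) * (1 + (S0 + bb)) <= (1 - bb) * y (N1 + m)%nat * (1 + (S0 + bb))).
   { apply Rmult_le_compat_r; lra. }
   assert ((1-bb)*(1+(S0+bb)) <= 1+S0) by nra.
   assert (y (N1 + m)%nat * ((1-bb)*(1+(S0+bb))) <= y (N1 + m)%nat * (1+S0)) by (apply Rmult_le_compat_l; lra).
   nra. }
 destruct (Hdiv N1 ltac:(lia) (2 * y N1 / eps)) as [m0 Hm0].
 exists (N1 + m0)%nat. intros n Hn. unfold Rdist. rewrite Rminus_0_r.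
 replace n with (N1 + (n - N1))%nat by lia.
 specialize (Hk (n - N1)%nat).
 assert (Hmono : fsum (fun j => b (N1 + j)%nat) m0 <= fsum (fun j => b (N1 + j)%nat) (n - N1)).
 { apply fsum_mono; [|lia]. intros; apply Hb; lia. }
 pose proof (Hy0 N1). pose proof (Hy0 (N1 + (n - N1))%nat).
 set (Sn := fsum (fun j => b (N1 + j)%nat) (n - N1)) in *.
 assert (y (N1 + (n - N1))%nat < eps / 2).
 { assert (2 * y N1 / eps * eps = 2 * y N1) by (field; lra).
   destruct (Rlt_or_le (y (N1 + (n - N1))%nat) (eps/2)) as [Hl|Hl]; auto.
   exfalso.
   assert (0 <= 2 * y N1 / eps) by (apply Rmult_le_pos; [lra| left; apply Rinv_0_lt_compat; lra]).
   assert (y (N1 + (n - N1))%nat * (1 + Sn) >= eps/2 * (1 + Sn)) by (apply Rmult_ge_compat_r; lra).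
   assert (eps/2 * (1 + Sn) >= eps/2 * (1 + 2 * y N1 / eps)) by (apply Rmult_ge_compat_l; lra).
   assert (eps/2 * (1 + 2 * y N1 / eps) = eps/2 + y N1) by (field; lra).
   lra. }
 unfold y in H1. pose proof (Rmax_l (Rabs (x (N1 + (n - N1))%nat) - eps / 2) 0). lra.
Qed.

Fixpoint wgt (a : nat -> R) (n k : nat) : R :=
 match n with
 | O => match k with O => 1 | S _ => 0 end
 | S m => (1 - a (S m)) * wgt a m k + a (S m) * (match k with O => 0 | S j => wgt a m j end)
 end.

Definition shw (a : nat -> R) (m k : nat) : R := match k with O => 0 | S j => wgt a m j end.

Lemma wgt_S a m k : wgt a (S m) k = (1 - a (S m)) * wgt a m k + a (S m) * shw a m k.
Proof. reflexivity. Qed.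

Lemma wgt_0 a n k : (n < k)%nat -> wgt a n k = 0.
Proof. revert k; induction n; intros k H.
 - destruct k; [lia|reflexivity].
 - rewrite wgt_S. unfold shw. rewrite IHn by lia. destruct k; [lia|]. rewrite IHn by lia. ring. Qed.

Lemma fsum_shw a n f : fsum (fun k => shw a n k * f k) (S (S n)) = fsum (fun j => wgt a n j * f (S j)) (S n).
Proof. rewrite fsum_shift. simpl shw at 1. rewrite Rmult_0_l, Rplus_0_l. reflexivity. Qed.

Lemma wgt_sum a n : fsum (wgt a n) (S n) = 1.
Proof. induction n. simpl. ring.
 rewrite (fsum_ext _ (fun k => (1 - a (S n)) * wgt a n k + a (S n) * (shw a n k * 1))) by
   (intros; rewrite wgt_S; ring).
 rewrite fsum_lin. rewrite fsum_shw.
 change (fsum (wgt a n) (S (S n))) with (fsum (wgt a n) (S n) + wgt a n (S n)).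
 rewrite wgt_0 by lia. rewrite IHn.
 rewrite (fsum_ext _ (wgt a n)) by (intros; ring). rewrite IHn. ring. Qed.

Lemma wgt_abs a n : fsum (fun k => Rabs (wgt a (S n) k)) (S (S n)) <=
   (Rabs (1 - a (S n)) + Rabs (a (S n))) * fsum (fun k => Rabs (wgt a n k)) (S n).
Proof.
 eapply Rle_trans.
 apply (fsum_le _ (fun k => Rabs (1 - a (S n)) * Rabs (wgt a n k) + Rabs (a (S n)) * (Rabs (shw a n k) * 1))).
 { intros k. rewrite wgt_S. rewrite Rmult_1_r, <- !Rabs_mult. apply Rabs_triang. }
 rewrite fsum_lin.
 rewrite (fsum_shift (fun k => Rabs (shw a n k) * 1)).
 unfold shw at 1. rewrite Rabs_R0.
 change (fsum (fun k => Rabs (wgt a n k)) (S (S n))) with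
   (fsum (fun k => Rabs (wgt a n k)) (S n) + Rabs (wgt a n (S n))).
 rewrite (wgt_0 a n (S n)) by lia. rewrite Rabs_R0.
 rewrite (fsum_ext (fun k => Rabs (shw a n (S k)) * 1) (fun k => Rabs (wgt a n k))) by (intros; simpl; ring).
 lra. Qed.

Lemma wgt_bound a N0 : (forall n, (N0 <= n)%nat -> 0 <= a (S n) <= 1) ->
  exists C, forall n, fsum (fun k => Rabs (wgt a n k)) (S n) <= C.
Proof.
 intros Ha. set (c := fun n => fsum (fun k => Rabs (wgt a n k)) (S n)).
 assert (Hc0 : forall n, 0 <= c n) by (intros; apply fsum_nonneg; intros; apply Rabs_pos).
 assert (Hdec : forall n, (N0 <= n)%nat -> c (S n) <= c n).
 { intros n Hn. unfold c. pose proof (wgt_abs a n). specialize (Ha n Hn).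
   rewrite Rabs_right in H by lra. rewrite (Rabs_right (a (S n))) in H by lra. lra. }
 exists (fsum c (S N0)). intros n.
 destruct (Nat.le_gt_cases n N0).
 - apply (fsum_le_term c n (S N0) Hc0). lia.
 - assert (forall m, c (N0 + m)%nat <= c N0).
   { induction m. rewrite Nat.add_0_r; lra. replace (N0 + S m)%nat with (S (N0 + m)) by lia.
     specialize (Hdec (N0 + m)%nat ltac:(lia)). lra. }
   specialize (H0 (n - N0)%nat). replace (N0 + (n - N0))%nat with n in H0 by lia.
   pose proof (fsum_le_term c N0 (S N0) Hc0 ltac:(lia)). fold (c n). lra.
Qed.

Lemma wgt_cv a N0 : (forall n, (N0 <= n)%nat -> 0 <= a (S n) <= 1) ->
  (forall N, (N0 <= N)%nat -> forall B, exists m, B <= fsum (fun j => a (S (N + j))) m) ->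
  forall k, Un_cv (fun n => wgt a n k) 0.
Proof.
 intros Ha Hd k. induction k.
 - apply (RL (fun n => a (S n)) _ (fun _ => 0) N0); auto.
   + intros e He. exists O. intros. unfold Rdist. rewrite Rminus_0_r, Rabs_R0. lra.
 - apply (RL (fun n => a (S n)) _ (fun n => wgt a n k) N0); auto.
Qed.

Lemma ln_step x : 1 <= x -> ln (x + 1) - ln x <= 1 / x.
Proof. intros Hx.
 replace (x + 1) with (x * (1 + 1/x)) by (field; lra).
 rewrite ln_mult by (try lra; assert (0 < 1/x) by (apply Rdiv_lt_0_compat; lra); lra).
 assert (0 < 1/x) by (apply Rdiv_lt_0_compat; lra).
 pose proof (exp_ineq1 (1/x) ltac:(lra)).
 pose proof (ln_increasing (1 + 1/x) (exp (1/x)) ltac:(lra) H0). rewrite ln_exp in H1. lra. Qed.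

Lemma harm N m : ln (INR (S (N + m))) - ln (INR (S N)) <= fsum (fun j => 1 / INR (S (N + j))) m.
Proof. induction m. rewrite Nat.add_0_r. simpl. lra.
 cbn [fsum]. replace (S (N + S m)) with (S (S (N + m))) by lia.
 pose proof (ln_step (INR (S (N + m)))). rewrite (S_INR (S (N + m))). 
 assert (1 <= INR (S (N + m))). { rewrite S_INR. pose proof (pos_INR (N+m)). lra. }
 specialize (H H0). lra. Qed.

Lemma harm_div theta N B : 0 < theta -> exists m, B <= fsum (fun j => theta / INR (S (N + j))) m.
Proof. intros Ht.
 destruct (INR_unbounded (exp (B / theta + ln (INR (S N))))) as [m Hm].
 exists m. pose proof (harm N m).
 rewrite (fsum_ext _ (fun j => theta * (1 / INR (S (N + j))) + 0 * 0)) by (intros; field; apply not_0_INR; lia).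
 rewrite fsum_lin.
 assert (INR m < INR (S (N + m))) by (apply lt_INR; lia).
 pose proof (exp_pos (B / theta + ln (INR (S N)))).
 pose proof (ln_increasing _ _ H1 (Rlt_trans _ _ _ Hm H0)). rewrite ln_exp in H2.
 assert (B / theta <= fsum (fun j => 1 / INR (S (N + j))) m) by lra.
 assert (B = theta * (B / theta)) by (field; lra). nra. Qed.

Lemma xsum_val {X} (e : nat -> option X) f l : infinite_sum (lift e f) l -> xsum e f = l.
Proof. intros H. unfold xsum. apply (uniqueness_sum (lift e f)); auto.
 apply (epsilon_spec (inhabits 0) (fun l => infinite_sum (lift e f) l)). eauto. Qed.

Lemma sumf_lin a b f g N : sum_f_R0 (fun n => a * f n + b * g n) N = a * sum_f_R0 f N + b * sum_f_R0 g N.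
Proof. induction N; simpl. ring. rewrite IHN; ring. Qed.

Lemma isum_lin a b f g l1 l2 : infinite_sum f l1 -> infinite_sum g l2 ->
  infinite_sum (fun n => a * f n + b * g n) (a * l1 + b * l2).
Proof. intros H1 H2. change (Un_cv (fun N => sum_f_R0 (fun n => a * f n + b * g n) N) (a*l1+b*l2)).
 apply (Un_cv_ext (fun N => a * sum_f_R0 f N + b * sum_f_R0 g N)).
 - intros; rewrite sumf_lin; auto.
 - apply CV_plus; apply CV_mult; auto; intros e He; exists O; intros; unfold Rdist;
   rewrite Rminus_diag, Rabs_R0; lra. Qed.

Lemma isum_ext f g l : (forall n, f n = g n) -> infinite_sum f l -> infinite_sum g l.
Proof. intros H. replace g with f; auto. apply functional_extensionality; auto. Qed.

Lemma sumf_ext f g N : (forall n, f n = g n) -> sum_f_R0 f N = sum_f_R0 g N.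
Proof. intros H; induction N; simpl; rewrite ?IHN, ?H; auto. Qed.

Lemma isum_comp f g : (forall n, 0 <= f n <= g n) -> (exists l, infinite_sum g l) -> exists l, infinite_sum f l.
Proof. intros H [l Hl]. destruct (Rseries_CV_comp f g H (exist _ l Hl)) as [l' Hl']. eauto. Qed.

Lemma abs_bounds x g : Rabs x <= g -> - g <= x <= g.
Proof. intros H. pose proof (Rle_abs x). pose proof (Rle_abs (-x)). rewrite Rabs_Ropp in H1. lra. Qed.

Lemma isum_abs f g : (forall n, Rabs (f n) <= g n) -> (exists l, infinite_sum g l) -> exists l, infinite_sum f l.
Proof. intros H [l Hl].
 destruct (isum_comp (fun n => 1 * f n + 1 * g n) (fun n => 2 * g n + 0 * g n)) as [l1 Hl1].
 - intros n. specialize (abs_bounds _ _ (H n)). lra.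
 - exists (2 * l + 0 * l). apply isum_lin; auto.
 - exists (1 * l1 + (-1) * l). eapply isum_ext; [|apply (isum_lin 1 (-1) _ _ _ _ Hl1 Hl)].
   intros; simpl; ring. Qed.

Lemma isum_le f g lf lg : infinite_sum f lf -> infinite_sum g lg -> (forall n, f n <= g n) -> lf <= lg.
Proof. intros Hf Hg H. destruct (Rle_or_lt lf lg) as [|Hlt]; auto. exfalso.
 set (eps := (lf - lg) / 2).
 destruct (Hf eps ltac:(unfold eps; lra)) as [N1 H1].
 destruct (Hg eps ltac:(unfold eps; lra)) as [N2 H2].
 specialize (H1 (N1 + N2)%nat ltac:(lia)). specialize (H2 (N1 + N2)%nat ltac:(lia)).
 unfold Rdist in *. apply Rabs_def2 in H1. apply Rabs_def2 in H2.
 pose proof (sum_Rle f g (N1+N2) (fun n _ => H n)). unfold eps in *. lra. Qed.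

Lemma sumf_term_le f n : (forall k, 0 <= f k) -> f n <= sum_f_R0 f n.
Proof. intros H. destruct n; simpl. lra. pose proof (cond_pos_sum f n H). lra. Qed.

Lemma isum_single f n0 : (forall n, n <> n0 -> f n = 0) -> infinite_sum f (f n0).
Proof. intros H.
 assert (forall N, (n0 <= N)%nat -> sum_f_R0 f N = f n0).
 { intros N HN. induction HN.
   - destruct n0; simpl. auto. rewrite (sum_eq_R0 f n0). ring. intros; apply H; lia.
   - simpl. rewrite IHHN, (H (S m)) by lia. ring. }
 intros eps He. exists n0. intros n Hn. rewrite H0 by lia. unfold Rdist. rewrite Rminus_diag, Rabs_R0. lra.
Qed.

Section Vec.
Variable X : Type.
Variable e : nat -> option X.
Variable eq_dec : forall x y : X, {x = y} + {x <> y}.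
Hypothesis He : is_enum e.
Implicit Types (A Bm : X -> X -> R) (v w f : X -> R) (y : X).

Definition asum (v : X -> R) := exists l, infinite_sum (lift e (fun x => Rabs (v x))) l.

Lemma lift_lin a b f g n : lift e (fun x => a * f x + b * g x) n = a * lift e f n + b * lift e g n.
Proof. unfold lift. destruct (e n); ring. Qed.

Lemma v_conv v A y B : asum v -> (forall x, Rabs (A x y) <= B) ->
  exists l, infinite_sum (lift e (fun x => v x * A x y)) l.
Proof. intros [l Hl] HB. apply (isum_abs _ (fun n => B * lift e (fun x => Rabs (v x)) n + 0 * 0)).
 - intros n. unfold lift. destruct (e n). rewrite Rabs_mult. specialize (HB x).
   pose proof (Rabs_pos (v x)). pose proof (Rabs_pos (A x y)). nra. rewrite Rabs_R0. lra.
 - exists (B * l + 0 * 0). apply isum_lin; auto. intros eps Heps. exists O. intros. unfold Rdist.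
   rewrite (sum_eq_R0 _ n) by auto. rewrite Rminus_diag, Rabs_R0; lra. Qed.

Lemma vecmat_lin a b v w A y B : asum v -> asum w -> (forall x, Rabs (A x y) <= B) ->
  vecmat e (fun x => a * v x + b * w x) A y = a * vecmat e v A y + b * vecmat e w A y.
Proof. intros Hv Hw HB. destruct (v_conv v A y B Hv HB) as [l1 H1]. destruct (v_conv w A y B Hw HB) as [l2 H2].
 unfold vecmat. rewrite (xsum_val e _ l1 H1), (xsum_val e _ l2 H2). apply xsum_val.
 eapply isum_ext; [|apply (isum_lin a b _ _ _ _ H1 H2)]. intros n. unfold lift. destruct (e n); ring. Qed.

Lemma isum_zero : infinite_sum (fun _ => 0) 0.
Proof. intros eps Heps. exists O. intros. unfold Rdist.
   rewrite (sum_eq_R0 _ n) by auto. rewrite Rminus_diag, Rabs_R0; lra. Qed.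

Lemma vecmat_zero A y : vecmat e (fun _ => 0) A y = 0.
Proof. unfold vecmat. apply xsum_val. eapply isum_ext; [|apply isum_zero]. intros n; unfold lift; destruct (e n); ring. Qed.

Lemma asum_lin a b v w : asum v -> asum w -> asum (fun x => a * v x + b * w x).
Proof. intros [l1 H1] [l2 H2]. unfold asum.
 apply (isum_comp _ (fun n => Rabs a * lift e (fun x => Rabs (v x)) n + Rabs b * lift e (fun x => Rabs (w x)) n)).
 - intros n. unfold lift. destruct (e n). split. apply Rabs_pos.
   eapply Rle_trans. apply Rabs_triang. rewrite !Rabs_mult. lra. lra.
 - eexists. apply isum_lin; eauto. Qed.

Lemma asum_zero : asum (fun _ => 0).
Proof. exists 0. eapply isum_ext; [|apply isum_zero]. intros n; unfold lift; destruct (e n); try rewrite Rabs_R0; ring. Qed.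

Lemma asum_fsum (c : nat -> R) (u : nat -> X -> R) N : (forall k, asum (u k)) ->
  asum (fun x => fsum (fun k => c k * u k x) N).
Proof. intros Hu. induction N; simpl. apply asum_zero.
 replace (fun x => fsum (fun k => c k * u k x) N + c N * u N x) with
   (fun x => 1 * fsum (fun k => c k * u k x) N + c N * u N x) by (apply functional_extensionality; intros; ring).
 apply asum_lin; auto. Qed.

Lemma vecmat_fsum (c : nat -> R) (u : nat -> X -> R) N A y B : (forall k, asum (u k)) ->
  (forall x, Rabs (A x y) <= B) ->
  vecmat e (fun x => fsum (fun k => c k * u k x) N) A y = fsum (fun k => c k * vecmat e (u k) A y) N.
Proof. intros Hu HB. induction N; simpl. apply vecmat_zero.
 replace (fun x => fsum (fun k => c k * u k x) N + c N * u N x) with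
   (fun x => 1 * fsum (fun k => c k * u k x) N + c N * u N x) by (apply functional_extensionality; intros; ring).
 rewrite (vecmat_lin _ _ _ _ A y B); auto. rewrite IHN; ring. apply asum_fsum; auto. Qed.

Lemma lift_single f y : (forall x, x <> y -> f x = 0) -> infinite_sum (lift e f) (f y).
Proof. intros Hf. destruct He as [Hs Hu]. destruct (Hs y) as [n0 Hn0].
 replace (f y) with (lift e f n0) by (unfold lift; rewrite Hn0; auto).
 apply isum_single. intros n Hn. unfold lift. destruct (e n) eqn:E; auto.
 apply Hf. intros ->. apply Hn. eapply Hu; eauto. Qed.

Lemma vecmat_idm v y : vecmat e v (idm eq_dec) y = v y.
Proof. unfold vecmat. apply xsum_val.
 replace (v y) with (v y * idm eq_dec y y) by (unfold idm; destruct (eq_dec y y); [ring|congruence]).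
 apply (lift_single (fun x => v x * idm eq_dec x y)). intros x Hx. unfold idm. destruct (eq_dec x y); [congruence|ring]. Qed.

Lemma vecmat_mat_lin v a b A Bm y : (exists l, infinite_sum (lift e (fun x => v x * A x y)) l) ->
  (exists l, infinite_sum (lift e (fun x => v x * Bm x y)) l) ->
  vecmat e v (fun x y => a * A x y + b * Bm x y) y = a * vecmat e v A y + b * vecmat e v Bm y.
Proof. intros [l1 H1] [l2 H2]. unfold vecmat. rewrite (xsum_val e _ l1 H1), (xsum_val e _ l2 H2). apply xsum_val.
 eapply isum_ext; [|apply (isum_lin a b _ _ _ _ H1 H2)]. intros n. unfold lift. destruct (e n); ring. Qed.

End Vec.

Section Stoch.
Variable X : Type.
Variable e : nat -> option X.
Hypothesis He : is_enum e.
Variable P : X -> X -> R.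
Hypothesis Pnn : forall x y, 0 <= P x y.
Hypothesis Prow : forall x, infinite_sum (lift e (P x)) 1.

Lemma lift_nn f : (forall x, 0 <= f x) -> forall n, 0 <= lift e f n.
Proof. intros H n; unfold lift; destruct (e n); auto; lra. Qed.

Lemma P_partial x N : sum_f_R0 (lift e (P x)) N <= 1.
Proof. apply sum_incr. apply Prow. apply lift_nn. auto. Qed.

Lemma P_le1 x y : Rabs (P x y) <= 1.
Proof. rewrite Rabs_right by (apply Rle_ge; auto). destruct He as [Hs _]. destruct (Hs y) as [n0 Hn].
 eapply Rle_trans; [|apply (P_partial x n0)].
 replace (P x y) with (lift e (P x) n0) by (unfold lift; rewrite Hn; auto).
 apply sumf_term_le. apply lift_nn; auto. Qed.

Lemma asum_abs v : asum X e v -> asum X e (fun x => Rabs (v x)).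
Proof. intros [l Hl]. exists l. eapply isum_ext; [|apply Hl]. intros n; unfold lift; destruct (e n); auto.
 rewrite Rabs_Rabsolu; auto. Qed.

Lemma asum_P v : asum X e v -> asum X e (fun y => vecmat e v P y).
Proof.
 intros Hv. destruct Hv as [L HL]. assert (Hv : asum X e v) by (exists L; auto).
 set (h := fun y => vecmat e (fun x => Rabs (v x)) P y).
 assert (H1 : forall y, infinite_sum (lift e (fun x => Rabs (v x) * P x y)) (h y)).
 { intros y. destruct (v_conv X e (fun x => Rabs (v x)) P y 1 (asum_abs v Hv) (fun x => P_le1 x y)) as [l Hl].
   unfold h, vecmat. rewrite (xsum_val e _ l Hl). auto. }
 assert (H2 : forall y, Rabs (vecmat e v P y) <= h y).
 { intros y. destruct (v_conv X e v P y 1 Hv (fun x => P_le1 x y)) as [l Hl].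
   unfold vecmat. rewrite (xsum_val e _ l Hl). apply Rabs_le. split.
   - assert ((-1) * l + 0 * l <= 1 * h y + 0 * h y); [|lra].
     eapply isum_le; [apply isum_lin; [apply Hl| apply Hl] | apply isum_lin; [apply H1 | apply H1] |].
     intros n. unfold lift. destruct (e n). pose proof (Pnn x y). pose proof (Rle_abs (- v x)).
     rewrite Rabs_Ropp in H0. nra. lra.
   - eapply isum_le; [apply Hl| apply H1|]. intros n. unfold lift. destruct (e n).
     pose proof (Pnn x y). pose proof (Rle_abs (v x)). nra. lra. }
 assert (H3 : forall n, infinite_sum (lift e (fun x => Rabs (v x) * lift e (P x) n)) (lift e h n)).
 { intros n. destruct (e n) eqn:E.
   - replace (lift e h n) with (h x) by (unfold lift; rewrite E; auto).
     eapply isum_ext; [|apply (H1 x)]. intros m. unfold lift. rewrite E. auto.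
   - replace (lift e h n) with 0 by (unfold lift; rewrite E; auto). eapply isum_ext; [|apply isum_zero]. intros m. unfold lift. rewrite E.
     destruct (e m); ring. }
 assert (H4 : forall N, infinite_sum (lift e (fun x => Rabs (v x) * sum_f_R0 (fun n => lift e (P x) n) N))
                   (sum_f_R0 (lift e h) N)).
 { induction N. simpl. apply H3. simpl.
   replace (sum_f_R0 (lift e h) N + lift e h (S N)) with (1 * sum_f_R0 (lift e h) N + 1 * lift e h (S N)) by ring.
   eapply isum_ext; [|apply (isum_lin 1 1 _ _ _ _ IHN (H3 (S N)))]. intros n. unfold lift. destruct (e n); ring. }
 assert (H5 : forall N, sum_f_R0 (lift e h) N <= L).
 { intros N. eapply isum_le; [apply H4| apply HL|]. intros n. unfold lift. destruct (e n).
   pose proof (P_partial x N). pose proof (Rabs_pos (v x)). unfold lift in H. nra. lra. }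
 assert (Hg : Un_growing (fun N => sum_f_R0 (lift e (fun y => Rabs (vecmat e v P y))) N)).
 { intros n. simpl. pose proof (lift_nn (fun y => Rabs (vecmat e v P y)) (fun y => Rabs_pos _) (S n)). lra. }
 destruct (growing_cv _ Hg) as [l Hl].
 - exists L. intros r [i ->]. eapply Rle_trans; [|apply (H5 i)]. apply sum_Rle. intros n _.
   unfold lift. destruct (e n). apply H2. lra.
 - exists l. exact Hl.
Qed.
End Stoch.

Lemma fsum_zero f n : (forall k, f k = 0) -> fsum f n = 0.
Proof. intros H; induction n; simpl; [|rewrite IHn, H]; ring. Qed.

Definition Qm {X} (eq_dec : forall x y : X, {x = y} + {x <> y}) (G : X -> X -> R) theta :=
  fun x y => idm eq_dec x y + G x y / theta.

Definition aseq (M : nat) (theta : R) (n : nat) : R := if Nat.ltb M n then theta / INR n else 0.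

Theorem mainTheorem14 (X : Type) (e : nat -> option X)
  (eq_dec : forall x y : X, {x = y} + {x <> y})
  (G : X -> X -> R) (theta : R) (M : nat) (pi mu : X -> R) :
  is_enum e ->
  is_generator e eq_dec G ->
  0 < theta ->
  (1 <= M)%nat ->
  (forall x y, 0 <= idm eq_dec x y + G x y / theta) ->
  (forall x y, 0 <= idm eq_dec x y + G x y / INR M) ->
  is_prob_vector e pi ->
  is_stationary e (fun x y => idm eq_dec x y + G x y / theta) mu ->
  (forall y, Un_cv (fun n => vpow e pi (fun x y => idm eq_dec x y + G x y / theta) n y) (mu y)) ->
  (forall y, Un_cv (fun n => vprod e pi (Kmat eq_dec G M) n y) (mu y)) /\
  (forall y, Un_cv (fun n => vecmat e (vprod e pi (Kmat eq_dec G M) n)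
                               (fun x y => idm eq_dec x y + G x y / theta) y) (mu y)).
Proof.
 intros Hen Hgen Hth HM HQnn _ Hpi _ Hcv.
 change (fun x y => idm eq_dec x y + G x y / theta) with (Qm eq_dec G theta) in *.
 set (Q := Qm eq_dec G theta) in *.
 assert (Qrow : forall x, infinite_sum (lift e (Q x)) 1).
 { intros x. destruct Hgen as [_ [Hrow _]].
   assert (Hid : infinite_sum (lift e (fun y => idm eq_dec x y)) 1).
   { pose proof (lift_single X e Hen (fun y => idm eq_dec x y) x) as Hs. cbv beta in Hs.
     replace (idm eq_dec x x) with 1 in Hs by (unfold idm; destruct (eq_dec x x); congruence).
     apply Hs. intros y Hy. unfold idm. destruct (eq_dec x y); congruence. }
   pose proof (isum_lin (1 + G x x / theta) (1 / theta) _ _ _ _ Hid (Hrow x)).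
   replace 1 with ((1 + G x x / theta) * 1 + 1 / theta * - G x x) by (field; lra).
   eapply isum_ext; [|apply H]. intros n. unfold lift, Q, Qm, idm. destruct (e n); auto.
   destruct (eq_dec x x0); [subst; field| field]; lra. ring. }
 assert (Qle : forall x y, Rabs (Q x y) <= 1) by (intros; apply (P_le1 X e Hen Q HQnn Qrow)).
 set (u := fun k => vpow e pi Q k).
 assert (Hu : forall k, asum X e (u k)).
 { induction k. destruct Hpi as [Hpn Hps]. exists 1. eapply isum_ext; [|apply Hps].
   intros n; unfold lift; destruct (e n); auto. simpl. rewrite Rabs_right; auto. apply Rle_ge; auto.
   apply (asum_P X e Hen Q HQnn Qrow (u k) IHk). }
 set (a := aseq M theta).
 assert (Kdec : forall n x y, Kmat eq_dec G M n x y = (1 - a n) * idm eq_dec x y + a n * Q x y).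
 { intros n x y. unfold Kmat, a, aseq, Q, Qm. destruct (Nat.ltb M n) eqn:E.
   - apply Nat.ltb_lt in E. assert (INR n <> 0) by (apply not_0_INR; lia). field. split; lra.
   - ring. }
 assert (Kstep : forall v n y, asum X e v -> vecmat e v (Kmat eq_dec G M n) y = (1 - a n) * v y + a n * vecmat e v Q y).
 { intros v n y Hv.
   replace (Kmat eq_dec G M n) with (fun x y => (1 - a n) * idm eq_dec x y + a n * Q x y)
     by (do 2 (apply functional_extensionality; intro); rewrite Kdec; auto).
   rewrite vecmat_mat_lin.
   - rewrite vecmat_idm; auto.
   - apply (v_conv X e v _ y 1 Hv). intros x. unfold idm. destruct (eq_dec x y); rewrite ?Rabs_R1, ?Rabs_R0; lra.
   - apply (v_conv X e v _ y 1 Hv). auto. }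
 assert (Rep : forall n N, (n < N)%nat -> forall y, vprod e pi (Kmat eq_dec G M) n y = fsum (fun k => wgt a n k * u k y) N).
 { induction n; intros N HN y.
   - destruct N; [lia|]. rewrite fsum_shift. rewrite fsum_zero by (intros; simpl; ring). change (vprod e pi (Kmat eq_dec G M) 0 y) with (pi y). change (wgt a 0 0) with 1. change (u 0%nat y) with (pi y). ring.
   - simpl vprod.
     replace (vprod e pi (Kmat eq_dec G M) n) with (fun x => fsum (fun k => wgt a n k * u k x) N)
       by (apply functional_extensionality; intros; rewrite (IHn N) by lia; auto).
     rewrite Kstep by (apply asum_fsum; auto).
     rewrite (vecmat_fsum X e _ _ N Q y 1) by auto.
     rewrite (fsum_ext (fun k => wgt a (S n) k * u k y) (fun k => (1 - a (S n)) * (wgt a n k * u k y) + a (S n) * (shw a n k * u k y)))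
       by (intros; rewrite wgt_S; ring).
     rewrite fsum_lin. destruct N as [|N']; [lia|].
     rewrite (fsum_shift (fun k => shw a n k * u k y)). simpl shw at 1.
     change (fsum (fun k => wgt a n k * vecmat e (u k) Q y) (S N')) with
       (fsum (fun k => wgt a n k * vecmat e (u k) Q y) N' + wgt a n N' * vecmat e (u N') Q y).
     rewrite (wgt_0 a n N') by lia.
     change (fsum (fun k => shw a n (S k) * u (S k) y) N') with (fsum (fun k => wgt a n k * vecmat e (u k) Q y) N').
     ring. }
 destruct (INR_unbounded theta) as [K0 HK0].
 set (N0 := Nat.max M K0).
 assert (Ha : forall n, (N0 <= n)%nat -> 0 <= a (S n) <= 1).
 { intros n Hn. unfold a, aseq. replace (Nat.ltb M (S n)) with true by (symmetry; apply Nat.ltb_lt; lia).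
   assert (INR K0 <= INR (S n)) by (apply le_INR; lia).
   split. apply Rlt_le, Rdiv_lt_0_compat; lra. apply (Rmult_le_reg_r (INR (S n))). lra.
   field_simplify; lra. }
 assert (Hdiv : forall N, (N0 <= N)%nat -> forall B, exists m, B <= fsum (fun j => a (S (N + j))) m).
 { intros N HN B. destruct (harm_div theta N B Hth) as [m Hm]. exists m.
   rewrite (fsum_ext _ (fun j => theta / INR (S (N + j)))); auto.
   intros k _. unfold a, aseq. replace (Nat.ltb M (S (N + k))) with true by (symmetry; apply Nat.ltb_lt; lia). auto. }
 destruct (wgt_bound a N0 Ha) as [C HC].
 pose proof (wgt_cv a N0 Ha Hdiv) as Hw.
 split.
 - intros y. apply (Un_cv_ext (fun n => fsum (fun k => wgt a n k * u k y) (S n))).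
   + intros n. rewrite (Rep n (S n)) by lia. auto.
   + apply (mix_lim (wgt a) C); auto. apply wgt_sum.
 - intros y. apply (Un_cv_ext (fun n => fsum (fun k => wgt a n k * u (S k) y) (S n))).
   + intros n. replace (vprod e pi (Kmat eq_dec G M) n) with (fun x => fsum (fun k => wgt a n k * u k x) (S n))
       by (apply functional_extensionality; intros; rewrite (Rep n (S n)) by lia; auto).
     rewrite (vecmat_fsum X e _ _ _ Q y 1) by auto. reflexivity.
   + apply (mix_lim (wgt a) C); auto. apply wgt_sum.
     intros eps Heps. destruct (Hcv y eps Heps) as [N HN]. exists N. intros n Hn. apply HN. lia.
Qed.
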